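(* Let $d\ge1$ and $c=(c_1,\dots,c_M)\in C(d,n,p)$. The image of the multiplication map $S_1\otimes T_{c,d}\to S_{d+1}$ equals $T_{c^1,d+1}$, where $c^1\in C(d+1,n,p)$ is $$c^1=(c_1,\dots,c_M,0)+(\underbrace{1,\dots,1}_{\lfloor d\rfloor'},0,\dots,0)-(\underbrace{1,\dots,1}_{c^\sharp},0,\dots,0),$$ all three vectors having length $M+1$ (carry patterns being compared after padding with zeros).
   Context: $\mathbf k$ algebraically closed of characteristic $p>0$, $S=\mathbf k[x_1,\dots,x_n]$, $S_e$ its degree-$e$ part. Base-$p$ expansion $a=\sum_{j\ge0}a_jp^j$, $0\le a_j\le p-1$; for $d\ge1$, $M=\max\{j:d_j\ne0\}$; and $\lfloor a\rfloor':=\min\{j: a_j\ne p-1\}$. The carry pattern of a degree-$d$ monomial $x_1^{b_1}\cdots x_n^{b_n}$ (with $b_{i,j}$ the base-$p$ digits of $b_i$) is $(c_1,\dots,c_M)$ determined by $\sum_i\sum_{j<\ell}b_{i,j}p^j=c_\ell p^\ell+\sum_{j<\ell}d_jp^j$ for $1\le\ell\le M$, with $c_i=0$ for $i<1$ or $i>M$. $C(d,n,p)$ is the set of carry patterns of degree-$d$ monomials, ordered componentwise (sequences of different length compared after appending zeros). For $c\in C(d,n,p)$, $T_{c,d}\subseteq S_d$ is the $\mathbf k$-span of the degree-$d$ monomials with carry pattern $\le c$. Also $c^\sharp:=\min\{0\le j\le M: d_j+pc_{j+1}-c_j<n(p-1)\}$ (using $c_0=c_{M+1}=0$). *)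

(* Defs.v *)
From HB Require Import structures.
From mathcomp Require Import all_boot all_order all_algebra.
From mathcomp Require Import finmap mpoly.
Set Implicit Arguments. Unset Strict Implicit. Unset Printing Implicit Defensive.
Import GRing.Theory.

Definition digit (p a j : nat) : nat := (a %/ p ^ j) %% p.

Definition topdeg (p d : nat) : nat :=
  \max_(j < d.+1 | digit p d j != 0) j.

(* floor'(a) = min{ j : a_j <> p-1 }  (searched in [0, a+1], which suffices for p >= 2) *)
Definition floorp (p a : nat) : nat :=
  find (fun j => digit p a j != p.-1) (iota 0 a.+2).

(* carry pattern of a monomial m of degree d = mdeg m, as a function
   nat -> nat, zero outside 1..M.  For 1 <= l <= M, c_l is defined by
   sum_i sum_{j<l} b_{i,j} p^j = c_l p^l + sum_{j<l} d_j p^j,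
   and sum_{j<l} a_j p^j = a %% p^l. *)
Definition carry (p n : nat) (m : 'X_{1..n}) (l : nat) : nat :=
  let d := mdeg m in
  if (1 <= l <= topdeg p d)%N then
    ((\sum_(i < n) (m i %% p ^ l)) - d %% p ^ l) %/ p ^ l
  else 0.

Definition is_carry_pattern (p n d : nat) (c : nat -> nat) : Prop :=
  exists m : 'X_{1..n}, mdeg m = d /\ forall l, c l = carry p m l.

(* componentwise order (sequences implicitly padded with zeros) *)
Definition carry_le (c c' : nat -> nat) : Prop := forall l, (c l <= c' l)%N.

(* T_{c,d}: the k-span of degree-d monomials with carry pattern <= c,
   i.e. polynomials all of whose monomials are of that kind. *)
Definition inT (k : fieldType) (p n : nat) (c : nat -> nat) (d : nat)
  (f : {mpoly k[n]}) : Prop :=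
  forall m, m \in msupp f -> mdeg m = d /\ carry_le (carry p m) c.

Definition inS1 (k : fieldType) (n : nat) (f : {mpoly k[n]}) : Prop :=
  forall m, m \in msupp f -> mdeg m = 1%N.

(* image of the multiplication map S_1 (x) T_{c,d} -> S_{d+1}:
   finite sums of products l * t with l in S_1 and t in T_{c,d} *)
Definition in_mul_image (k : fieldType) (p n : nat) (c : nat -> nat) (d : nat)
  (f : {mpoly k[n]}) : Prop :=
  exists s : seq ({mpoly k[n]} * {mpoly k[n]}),
    (forall x, x \in s -> @inS1 k n x.1 /\ @inT k p n c d x.2) /\
    f = (\sum_(x <- s) x.1 * x.2)%R.

(* c^sharp = min{0 <= j <= M : d_j + p c_{j+1} - c_j < n(p-1)}, c_0 = c_{M+1} = 0
   (returns M+1 if no such j) ; the inequality is rewritten without subtraction *)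
Definition csharp (p n d : nat) (c : nat -> nat) : nat :=
  let M := topdeg p d in
  let c' := fun i => if (1 <= i <= M)%N then c i else 0 in
  find (fun j => digit p d j + p * c' j.+1 < n * p.-1 + c' j)%N (iota 0 M.+1).

Definition c_one (p n d : nat) (c : nat -> nat) (l : nat) : nat :=
  let M := topdeg p d in
  let c' := if (1 <= l <= M)%N then c l else 0 in
  (c' + (1 <= l <= floorp p d)%N) - (1 <= l <= csharp p n d c)%N.

(* Main.v *)
Require Import Defs.
From HB Require Import structures.
From mathcomp Require Import all_boot all_order all_algebra.
From mathcomp Require Import finmap mpoly.
From mathcomp Require Import zify ring.
Set Implicit Arguments. Unset Strict Implicit. Unset Printing Implicit Defensive.
Import GRing.Theory.

Lemma modn_expS (p a j : nat) : 0 < p ->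
  a %% p ^ j.+1 = a %% p ^ j + p ^ j * digit p a j.
Proof.
move=> p0; rewrite /digit.
have pj0 : 0 < p ^ j by rewrite expn_gt0 p0.
set q := a %/ p ^ j.
have Ha : a = q * p ^ j + a %% p ^ j by rewrite [LHS](divn_eq a (p ^ j)).
have Hq : q = q %/ p * p + q %% p by rewrite [LHS](divn_eq q p).
have Hr : a %% p ^ j < p ^ j by rewrite ltn_mod.
have Hs : q %% p < p by rewrite ltn_mod.
have E : a = q %/ p * p ^ j.+1 + (a %% p ^ j + p ^ j * (q %% p)).
  rewrite {1}Ha {1}Hq expnSr; ring.
rewrite {1}E modnMDl modn_small // expnSr.
have : a %% p ^ j + p ^ j * (q %% p) < p ^ j + p ^ j * (q %% p) by rewrite ltn_add2r.
move=> h; apply: (leq_trans h).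
have : p ^ j * (q %% p).+1 <= p ^ j * p by rewrite leq_mul2l Hs orbT.
by rewrite mulnS mulnC.
Qed.

Lemma digit_lt (p a j : nat) : 0 < p -> digit p a j < p.
Proof. by move=> p0; rewrite /digit ltn_mod. Qed.

Lemma full_aux (X p r s : nat) : 0 < X -> 0 < p -> r < X -> s < p ->
  (r + X * s = (X * p).-1) <-> (r = X.-1 /\ s = p.-1).
Proof.
move=> X0 p0 rX sp; split; last first.
  move=> [-> ->]. nia.
move=> h.
have hs : s = p.-1.
  apply/eqP; rewrite eqn_leq -ltnS prednK // sp /=.
  rewrite leqNgt; apply/negP => hlt.
  have : r + X * s <= X.-1 + X * (p.-1.-1) by apply: leq_add; [rewrite -ltnS prednK|rewrite leq_mul2l; apply/orP;right; rewrite -ltnS prednK // -ltnS prednK //; nia].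
  nia.
split => //. subst s. nia.
Qed.

Lemma full_iff (p a l : nat) : 0 < p ->
  (a %% p ^ l = (p ^ l).-1) <-> (forall j, j < l -> digit p a j = p.-1).
Proof.
move=> p0; elim: l => [|l IH].
  by rewrite expn0 modn1; split => // _ j.
have X0 : 0 < p ^ l by rewrite expn_gt0 p0.
rewrite modn_expS // expnSr full_aux ?ltn_mod ?digit_lt //.
split.
  move=> [/IH h1 h2] j; rewrite ltnS leq_eqVlt => /orP [/eqP -> //|]; exact: h1.
move=> h; split; last exact: h.
by apply/IH => j jl; apply: h; rewrite ltnS ltnW.
Qed.

Lemma digit_big (p a j : nat) : 1 < p -> a < p ^ j -> digit p a j = 0.
Proof. by move=> p1 h; rewrite /digit divn_small // mod0n. Qed.

Lemma floorp_ge (p a l : nat) : 1 < p ->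
  (l <= floorp p a) <-> (forall j, j < l -> digit p a j = p.-1).
Proof.
move=> p1; rewrite /floorp.
set P := (fun j => digit p a j != p.-1).
have hasP : has P (iota 0 a.+2).
  apply/hasP; exists a.+1; first by rewrite mem_iota add0n ltnSn.
  rewrite /P; have -> : digit p a a.+1 = 0 by apply: digit_big => //; exact: ltn_trans (ltnSn a) (ltn_expl _ p1).
  by rewrite eq_sym -lt0n -ltnS prednK // ltnW.
split.
  move=> hl j jl.
  have js : j < size (iota 0 a.+2).
    exact: leq_trans (leq_trans jl hl) (find_size _ _).
  have := before_find 0 (leq_trans jl hl).
  rewrite size_iota in js; rewrite nth_iota // /P add0n.
  by move/negbFE/eqP.
move=> h; rewrite leqNgt; apply/negP => hlt.
have := nth_find 0 hasP; rewrite nth_iota; last by move: hasP; rewrite has_find size_iota.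
by rewrite /P add0n h // eqxx.
Qed.

Lemma floorp_digit (p a : nat) : 1 < p -> digit p a (floorp p a) != p.-1.
Proof.
move=> p1; apply/negP => /eqP h.
have : (floorp p a).+1 <= floorp p a.
  apply/floorp_ge => // j; rewrite ltnS leq_eqVlt => /orP [/eqP -> //|].
  by apply: (floorp_ge a (floorp p a) p1).1.
by rewrite ltnn.
Qed.

Lemma floorp_mod (p a l : nat) : 1 < p ->
  a.+1 %% p ^ l + (l <= floorp p a) * p ^ l = a %% p ^ l + 1.
Proof.
move=> p1; have p0 : 0 < p by apply: ltnW.
have X0 : 0 < p ^ l by rewrite expn_gt0 p0.
have E : a.+1 = a %/ p ^ l * p ^ l + (a %% p ^ l).+1.
  by rewrite addnS -divn_eq.
have r : a %% p ^ l < p ^ l by rewrite ltn_mod.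
case: (boolP (l <= floorp p a)) => hl.
  have h : a %% p ^ l = (p ^ l).-1 by apply/full_iff => //; apply/floorp_ge.
  rewrite E h prednK // -mulSnr modnMl. rewrite mul1n add0n; nia.
have h : a %% p ^ l != (p ^ l).-1.
  apply/negP => /eqP /(full_iff _ _ p0) /(floorp_ge _ _ p1) h'.
  by rewrite h' in hl.
rewrite E modnMDl modn_small; first by rewrite mul0n addn0 addn1.
rewrite ltn_neqAle r andbT; apply/negP => /eqP h2.
by move: h; rewrite -{2}h2 succnK eqxx.
Qed.

Lemma digit_topdeg (p d j : nat) : 1 < p -> topdeg p d < j -> digit p d j = 0.
Proof.
move=> p1 hj; case: (leqP j d) => jd.
  apply/eqP; apply/negPn/negP => h.
  have := @leq_bigmax_cond _ (fun i : 'I_d.+1 => digit p d i != 0) (fun i => nat_of_ord i) (Ordinal (jd : j < d.+1)) h.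
  by rewrite -/(topdeg p d) /= leqNgt hj.
apply: digit_big => //; exact: ltn_trans jd (ltn_expl _ p1).
Qed.

Lemma topdeg_lt (p d : nat) : 1 < p -> d < p ^ (topdeg p d).+1.
Proof.
move=> p1; have p0 : 0 < p by apply: ltnW.
have H : forall N, d %% p ^ ((topdeg p d).+1 + N) = d %% p ^ (topdeg p d).+1.
  elim=> [|N IH]; first by rewrite addn0.
  by rewrite addnS modn_expS // digit_topdeg // ?muln0 ?addn0 // ltnS leq_addr.
have : d < p ^ ((topdeg p d).+1 + d).
  apply: leq_trans (ltn_expl _ p1) _; by rewrite leq_pexp2l // leq_addl.
move=> h; have := ltn_mod d (p ^ (topdeg p d).+1); rewrite -(H d) (modn_small h) expn_gt0 p0; exact.
Qed.

Lemma mnm_le_deg (n : nat) (m : 'X_{1..n}) i : m i <= mdeg m.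
Proof. by rewrite mdegE (bigD1 i) //= leq_addr. Qed.

Lemma carry_rel (p n : nat) (m : 'X_{1..n}) (l : nat) : 1 < p ->
  carry p m l * p ^ l + mdeg m %% p ^ l = \sum_(i < n) (m i %% p ^ l).
Proof.
move=> p1; have p0 : 0 < p by apply: ltnW.
have X0 : 0 < p ^ l by rewrite expn_gt0 p0.
rewrite /carry; set S := \sum_(i < n) (m i %% p ^ l).
have SE : S %% p ^ l = mdeg m %% p ^ l by rewrite /S modn_summ mdegE.
case: ifP => hl.
  rewrite -SE.
  have -> : S - S %% p ^ l = S %/ p ^ l * p ^ l by rewrite {1}(divn_eq S (p ^ l)) addnK.
  by rewrite mulnK // -divn_eq.
case: (posnP l) => [l0|lpos].
  by rewrite /S l0 expn0 modn1 big1 // => i _; rewrite modn1.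
have hM : topdeg p (mdeg m) < l by move: hl; rewrite lpos /= => /negbT; rewrite -ltnNge.
have dl : mdeg m < p ^ l.
  apply: leq_trans (topdeg_lt _ p1) _; rewrite leq_pexp2l //.
rewrite mul0n add0n /S (modn_small dl) mdegE; apply: eq_bigr => i _.
rewrite modn_small //; apply: leq_ltn_trans (mnm_le_deg m i) dl.
Qed.

Lemma carry_step (p n : nat) (m : 'X_{1..n}) (i : 'I_n) (l : nat) : 1 < p ->
  carry p (m + U_(i))%MM l + (l <= floorp p (m i)) =
  carry p m l + (l <= floorp p (mdeg m)).
Proof.
move=> p1; have p0 : 0 < p by apply: ltnW.
have X0 : 0 < p ^ l by rewrite expn_gt0 p0.
apply/eqP; rewrite -(eqn_pmul2r X0) !mulnDl; apply/eqP.
have R1 := carry_rel (m + U_(i))%MM l p1.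
have R0 := carry_rel m l p1.
rewrite mdegD mdeg1 addn1 in R1.
rewrite (bigD1 i) //= in R1; rewrite (bigD1 i) //= in R0.
have E : \sum_(j < n | j != i) ((m + U_(i))%MM j %% p ^ l) = \sum_(j < n | j != i) (m j %% p ^ l).
  apply: eq_bigr => j ji; rewrite mnmDE mnm1E eq_sym (negbTE ji) addn0 //.
rewrite E in R1.
rewrite mnmDE mnm1E eqxx addn1 in R1.
have F1 := floorp_mod (m i) l p1.
have F2 := floorp_mod (mdeg m) l p1.
move: R1 R0 F1 F2; set A := carry _ _ _; set B := carry _ _ _.
set S := \sum_(_ < n | _) _. set X := p ^ l. set u := nat_of_bool _. set v := nat_of_bool _. set r1 := _ %% X. set r2 := _ %% X. set r3 := _ %% X. set r4 := _ %% X. rewrite -/S. move=> *. clearbody A B S X u v r1 r2 r3 r4. nia.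
Qed.

Lemma col_rel (p n : nat) (m : 'X_{1..n}) (j : nat) : 1 < p ->
  p * carry p m j.+1 + digit p (mdeg m) j =
  carry p m j + \sum_(i < n) digit p (m i) j.
Proof.
move=> p1; have p0 : 0 < p by apply: ltnW.
have X0 : 0 < p ^ j by rewrite expn_gt0 p0.
have R1 := carry_rel m j.+1 p1.
have R0 := carry_rel m j p1.
rewrite (eq_bigr (fun i => m i %% p ^ j + p ^ j * digit p (m i) j)) in R1; last first.
  by move=> i _; rewrite modn_expS.
rewrite big_split /= -big_distrr /= modn_expS // -R0 expnSr in R1.
apply/eqP; rewrite -(eqn_pmul2l X0) !mulnDr; apply/eqP.
move: R1; set A := carry _ _ _; set B := carry _ _ _; set X := p ^ j.
set D := digit _ _ _; set S := \sum_(_ < n) _; set r := _ %% X.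
clearbody A B X D S r. nia.
Qed.

Lemma sum_const_ord (n q : nat) : \sum_(i < n) q = n * q.
Proof. by rewrite sum_nat_const card_ord. Qed.

Lemma sum_bounded (n q : nat) (f : 'I_n -> nat) : (forall i, f i <= q) ->
  \sum_(i < n) f i <= n * q.
Proof. by move=> h; rewrite -sum_const_ord; apply: leq_sum => i _. Qed.

Lemma sum_full (n q : nat) (f : 'I_n -> nat) : (forall i, f i <= q) ->
  \sum_(i < n) f i = n * q -> forall i, f i = q.
Proof.
move=> h hs i.
have E : \sum_(i < n) (q - f i) + \sum_(i < n) f i = \sum_(i < n) q.
  rewrite -big_split; apply: eq_bigr => k _ /=; by rewrite subnK.
rewrite hs sum_const_ord -{2}(add0n (n * q)) in E.
move/addIn/eqP: E; rewrite sum_nat_eq0 => /forallP /(_ i) /=.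
by rewrite subn_eq0 => hq; apply/eqP; rewrite eqn_leq h.
Qed.

Lemma digit_le (p a j : nat) : 1 < p -> digit p a j <= p.-1.
Proof. by move=> p1; rewrite -ltnS prednK ?digit_lt // ltnW. Qed.

Lemma carry0 (p n : nat) (m : 'X_{1..n}) : carry p m 0 = 0.
Proof. by []. Qed.

Lemma cprime_eq (p n d : nat) (b0 : 'X_{1..n}) (c : nat -> nat) :
  mdeg b0 = d -> (forall l, c l = carry p b0 l) ->
  forall i, (if (1 <= i <= topdeg p d) then c i else 0) = c i.
Proof.
move=> hd hc i; rewrite hc /carry hd; by case: (1 <= i <= topdeg p d).
Qed.

Definition Qs (p n d : nat) (c : nat -> nat) j :=
  (digit p d j + p * c j.+1 < n * p.-1 + c j).

Lemma csharpE (p n d : nat) (b0 : 'X_{1..n}) (c : nat -> nat) :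
  mdeg b0 = d -> (forall l, c l = carry p b0 l) ->
  csharp p n d c = find (Qs p n d c) (iota 0 (topdeg p d).+1).
Proof.
move=> hd hc; rewrite /csharp; apply: eq_find => j.
by rewrite /Qs !(cprime_eq hd hc).
Qed.

Lemma colsum_le (p n : nat) (m : 'X_{1..n}) j : 1 < p ->
  \sum_(i < n) digit p (m i) j <= n * p.-1.
Proof. by move=> p1; apply: sum_bounded => i; apply: digit_le. Qed.

Lemma full_below (p n d : nat) (b0 : 'X_{1..n}) (c : nat -> nat) : 1 < p ->
  mdeg b0 = d -> (forall l, c l = carry p b0 l) ->
  forall j, j < csharp p n d c ->
  \sum_(i < n) digit p (b0 i) j = n * p.-1.
Proof.
move=> p1 hd hc j hj.
rewrite (csharpE hd hc) in hj.
have := before_find 0 hj.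
have js : j < (topdeg p d).+1.
  by apply: leq_trans hj _; rewrite -{2}(size_iota 0 (topdeg p d).+1) find_size.
rewrite nth_iota // add0n /Qs => /negbT; rewrite -leqNgt.
have := col_rel b0 j p1; rewrite hd -!hc.
have := colsum_le b0 j p1.
move: (\sum_(i < n) _) => S; lia.
Qed.

Lemma floorp_b0_ge (p n d : nat) (b0 : 'X_{1..n}) (c : nat -> nat) : 1 < p ->
  mdeg b0 = d -> (forall l, c l = carry p b0 l) ->
  forall i, csharp p n d c <= floorp p (b0 i).
Proof.
move=> p1 hd hc i; apply/floorp_ge => // j hj.
by apply: (sum_full (fun i => digit_le (b0 i) j p1)); apply: full_below hj.
Qed.

Lemma witness_i0 (p n d : nat) (b0 : 'X_{1..n}) (c : nat -> nat) : 1 < p ->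
  0 < d -> mdeg b0 = d -> (forall l, c l = carry p b0 l) ->
  exists i0, floorp p (b0 i0) = csharp p n d c.
Proof.
move=> p1 d0 hd hc.
suff [i0 hi0] : exists i0, digit p (b0 i0) (csharp p n d c) != p.-1.
  exists i0; apply/eqP; rewrite eqn_leq floorp_b0_ge // andbT.
  rewrite leqNgt; apply/negP => /(floorp_ge (b0 i0) _ p1) h.
  by rewrite h ?eqxx in hi0.
have n0 : 0 < n.
  rewrite lt0n; apply/negP => /eqP n0; move: hd; rewrite mdegE.
  by move: b0 hc; rewrite n0 => b0 _; rewrite big_ord0 => h; rewrite -h in d0.
have hcs := csharpE hd hc.
case: (ltnP (csharp p n d c) (topdeg p d).+1) => hlt.
  have hh : has (Qs p n d c) (iota 0 (topdeg p d).+1).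
    by rewrite has_find -hcs size_iota.
  move: (nth_find 0 hh); rewrite -hcs nth_iota // add0n /Qs => hQ.
  have := col_rel b0 (csharp p n d c) p1; rewrite hd -!hc => hcol.
  apply/existsP; rewrite -negb_forall; apply/negP => /forallP hall.
  have : \sum_(i < n) digit p (b0 i) (csharp p n d c) = n * p.-1.
    by rewrite -sum_const_ord; apply: eq_bigr => i _; apply/eqP; apply: hall.
  lia.
exists (Ordinal n0).
rewrite digit_big //.
  by rewrite eq_sym -lt0n -ltnS prednK // ltnW.
apply: leq_ltn_trans (mnm_le_deg b0 _) _; rewrite hd.
apply: leq_trans (topdeg_lt d p1) _; by rewrite leq_pexp2l // ltnW.
Qed.

Lemma c_one_carry (p n d : nat) (b0 : 'X_{1..n}) (c : nat -> nat) (i0 : 'I_n) :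
  1 < p -> mdeg b0 = d -> (forall l, c l = carry p b0 l) ->
  floorp p (b0 i0) = csharp p n d c ->
  forall l, c_one p n d c l = carry p (b0 + U_(i0))%MM l /\
            c_one p n d c l + (l <= csharp p n d c) = c l + (l <= floorp p d).
Proof.
move=> p1 hd hc hi0 l.
have hs := carry_step b0 i0 l p1.
rewrite hi0 hd -hc in hs.
have E : c_one p n d c l = carry p (b0 + U_(i0))%MM l.
  rewrite /c_one (cprime_eq hd hc).
  case: (posnP l) => [->|lpos]; first by rewrite hc.
  rewrite /=; move: hs.
  move: (carry _ _ _) (l <= _) (l <= _) => A [] [] /=; lia.
by rewrite E.
Qed.

Lemma key_strict (p n d : nat) (b0 m : 'X_{1..n}) (c : nat -> nat) (i : 'I_n) :
  1 < p -> mdeg b0 = d -> (forall l, c l = carry p b0 l) ->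
  mdeg m = d -> (forall l, carry p m l <= c l) ->
  forall k, floorp p (m i) + 1 + k <= csharp p n d c ->
  carry p m (floorp p (m i) + 1 + k) < c (floorp p (m i) + 1 + k).
Proof.
move=> p1 hd hc hm hle; set t := floorp p (m i).
have Hstep : forall j, j < csharp p n d c ->
   (carry p m j < c j \/ \sum_(i < n) digit p (m i) j < n * p.-1) ->
   carry p m j.+1 < c j.+1.
  move=> j hj hor.
  have h1 := col_rel b0 j p1; rewrite hd -!hc (full_below p1 hd hc hj) in h1.
  have h2 := col_rel m j p1; rewrite hm in h2.
  have h3 := colsum_le m j p1.
  have h4 := hle j; have h5 := hle j.+1.
  rewrite -(ltn_pmul2l (ltnW p1)).
  move: h1 h2 h3 h4 h5 hor.
  move: (carry p m j) (carry p m j.+1) (c j) (c j.+1) (\sum_(i < n) _) (p * _) (p * _) => *.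
  lia.
elim=> [|k IH] hk.
  rewrite addn0 addn1; apply: Hstep; first by rewrite -addn1 -(addn0 (t + 1)).
  right; rewrite ltn_neqAle colsum_le // andbT; apply/negP => /eqP hs.
  have := sum_full (fun i => digit_le (m i) t p1) hs i.
  by move/eqP; rewrite (negbTE (floorp_digit (m i) p1)).
rewrite addnS; apply: Hstep; first by rewrite addnS in hk.
by left; apply: IH; rewrite addnS in hk; apply: ltnW.
Qed.

Lemma dir1 (p n d : nat) (b0 m : 'X_{1..n}) (c : nat -> nat) (i : 'I_n) :
  1 < p -> mdeg b0 = d -> (forall l, c l = carry p b0 l) ->
  (forall l, c_one p n d c l + (l <= csharp p n d c) = c l + (l <= floorp p d)) ->
  mdeg m = d -> (forall l, carry p m l <= c l) ->
  forall l, carry p (m + U_(i))%MM l <= c_one p n d c l.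
Proof.
move=> p1 hd hc hid hm hle l.
have hs := carry_step m i l p1; rewrite hm in hs.
have h1 := hid l; have h2 := hle l.
case: (leqP l (floorp p (m i))) => hlt.
  move: hs h1 h2; rewrite hlt.
  move: (carry _ _ _) (c_one _ _ _ _ _) (l <= _) (l <= _) (c l) (carry p m l) => *; lia.
case: (leqP l (csharp p n d c)) => hlc; last first.
  have e1 : (l <= floorp p (m i)) = false by rewrite leqNgt hlt.
  have e2 : (l <= csharp p n d c) = false by rewrite leqNgt hlc.
  move: hs h1 h2; rewrite e1 e2 /=.
  move: (carry _ _ _) (c_one _ _ _ _ _) (l <= _) (c l) (carry p m l) => *; lia.
have hk := @key_strict p n d b0 m c i p1 hd hc hm hle (l - (floorp p (m i)).+1).
rewrite addn1 subnKC // in hk.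
have := hk hlc.
have e1 : (l <= floorp p (m i)) = false by rewrite leqNgt hlt.
move: hs h1 h2; rewrite e1 hlc /=.
move: (carry _ _ _) (c_one _ _ _ _ _) (l <= _) (c l) (carry p m l) => *; lia.
Qed.

Lemma dir2 (p n d : nat) (c1 c : nat -> nat) (m' : 'X_{1..n}) (cs : nat) :
  1 < p ->
  (forall l, c1 l + (l <= cs) = c l + (l <= floorp p d)) ->
  mdeg m' = d.+1 -> (forall l, carry p m' l <= c1 l) ->
  exists i m, m' = (m + U_(i))%MM /\ mdeg m = d /\ forall l, carry p m l <= c l.
Proof.
move=> p1 hid hm' hle.
have p0 : 0 < p by apply: ltnW.
have hex : exists v, [exists i : 'I_n, (0 < m' i) && (floorp p (m' i).-1 == v)].
  have : (\sum_(i < n) m' i == 0) = false by rewrite -mdegE hm'.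
  rewrite sum_nat_eq0 => /negbT; rewrite negb_forall => /existsP [i hi].
  by exists (floorp p (m' i).-1); apply/existsP; exists i; rewrite lt0n hi eqxx.
case: (ex_minnP hex) => v /existsP [i /andP [mi0 /eqP hv]] hmin.
have hminj : forall j, 0 < m' j -> v <= floorp p (m' j).-1.
  by move=> j hj; apply: hmin; apply/existsP; exists j; rewrite hj eqxx.
pose m := (m' - U_(i))%MM.
have hmE : m' = (m + U_(i))%MM.
  apply/mnmP => j; rewrite mnmDE mnmBE mnm1E.
  by case: eqP => [<-|]; [rewrite subnK | rewrite subn0 addn0].
have hmd : mdeg m = d by move: hm'; rewrite hmE mdegD mdeg1 addn1 => -[].
have hmi : m i = (m' i).-1 by rewrite mnmBE mnm1E eqxx subn1.
exists i, m; split => //; split => // l.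
have hs := carry_step m i l p1.
rewrite -hmE hmd hmi hv in hs.
have h1 := hid l; have h2 := hle l.
case: (leqP l v) => hlv; last first.
  have e : (l <= v) = false by rewrite leqNgt hlv.
  move: hs h1 h2; rewrite e.
  move: (carry p m' l) (carry p m l) (c1 l) (c l) (l <= _) (l <= _) => *; lia.
have X0 : 0 < p ^ l by rewrite expn_gt0 p0.
have hS : \sum_(j < n) (m' j %% p ^ l) = 0.
  apply: big1 => j _; case: (posnP (m' j)) => [->|hj]; first by rewrite mod0n.
  have := floorp_mod (m' j).-1 l p1.
  rewrite prednK // (leq_trans hlv (hminj j hj)) mul1n.
  have := ltn_mod (m' j).-1 (p ^ l); lia.
have hr := carry_rel m' l p1; rewrite hS hm' in hr.
have hF := floorp_mod d l p1.
have hc0 : carry p m' l = 0.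
  apply/eqP; rewrite -(eqn_pmul2r X0) mul0n; apply/eqP; lia.
have hd0 : d.+1 %% p ^ l = 0 by lia.
move: hs; rewrite hc0 hlv.
move: hF; rewrite hd0 add0n.
case: (l <= floorp p d) => /=; last by rewrite mul0n addn1.
lia.
Qed.

Lemma mul_image_add (k : fieldType) (p n : nat) (c : nat -> nat) (d : nat)
  (f g : {mpoly k[n]}) :
  in_mul_image p c d f -> in_mul_image p c d g -> in_mul_image p c d (f + g).
Proof.
move=> [s1 [h1 ->]] [s2 [h2 ->]]; exists (s1 ++ s2); split; last by rewrite big_cat.
by move=> x; rewrite mem_cat => /orP [/h1|/h2].
Qed.

Unset Implicit Arguments.

Theorem mainTheorem6 (k : closedFieldType) (p n d : nat) (c : nat -> nat) :
  prime p -> p \in [pchar k]%R -> (1 <= d)%N ->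
  is_carry_pattern p n d c ->
  is_carry_pattern p n d.+1 (c_one p n d c) /\
  forall f : {mpoly k[n]},
    in_mul_image p c d f <-> inT p (c_one p n d c) d.+1 f.
Proof.
move=> pp _ d1 [b0 [hd hc]].
have p1 : 1 < p := prime_gt1 pp.
have [i0 hi0] := witness_i0 p1 d1 hd hc.
have hco := c_one_carry p1 hd hc hi0.
split.
  exists (b0 + U_(i0))%MM; split; first by rewrite mdegD mdeg1 hd addn1.
  by move=> l; case: (hco l).
have hid : forall l, c_one p n d c l + (l <= csharp p n d c) = c l + (l <= floorp p d).
  by move=> l; case: (hco l).
move=> f; split.
  move=> [s [hs ->]] m /msupp_sum_le /flatten_mapP [x].
  rewrite mem_filter => /andP [_ xs] /msuppM_le /allpairsP [[m1 m2] [/= hm1 hm2 ->]].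
  have [hS1 hT] := hs x xs.
  have /mdeg1P [i /eqP ->] : mdeg m1 == 1 by rewrite hS1.
  have [hm2d hm2c] := hT m2 hm2.
  split; first by rewrite mdegD mdeg1 hm2d.
  rewrite addmC => l; exact: (dir1 i p1 hd hc hid hm2d hm2c).
move=> hf; rewrite (mpolyE f) big_seq.
apply: (big_ind (in_mul_image p c d)).
- by exists [::]; split => //; rewrite big_nil.
- by move=> a b; apply: mul_image_add.
move=> m hm; have [hmd hmc] := hf m hm.
have [i [m2 [hmE [hm2d hm2c]]]] := dir2 p1 hid hmd hmc.
exists [:: ('X_[U_(i)], (f@_m *: 'X_[m2])%R)]; split.
  move=> x; rewrite mem_seq1 => /eqP -> /=; split.
    by move=> m'; rewrite msuppX mem_seq1 => /eqP ->; rewrite mdeg1.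
  move=> m' /msuppZ_le; rewrite msuppX mem_seq1 => /eqP ->; split => //.
by rewrite big_cons big_nil addr0 /= hmE mpolyXD -scalerAr mulrC.
Qed.
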